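(* Let $\tau$ be a nowhere vanishing function of $(s,r,\boldsymbol t,\bar{\boldsymbol t})$ with associated wave functions as in the context. The six difference Fay identities (1a),(1b),(2a),(2b),(3a),(3b) listed in the context are equivalent to the system of the following four equations holding for each of the four pairs $(\Phi_1,\Phi_2)=(\Psi_1,\Psi_2),(\Psi^*_1,\Psi^*_2),(\bar\Psi_1,\bar\Psi_2),(\bar\Psi^*_1,\bar\Psi^*_2)$ (functions of $(s,r,\boldsymbol t,\bar{\boldsymbol t},\mu)$; only shifted arguments are displayed, others equal $(\boldsymbol t,\bar{\boldsymbol t})$): $$\Phi_1(s,r,\boldsymbol t-[\lambda^{-1}])+\lambda^{-1}\Phi_1(s+1,r)-\frac{\tau(s+1,r,\boldsymbol t-[\lambda^{-1}])\tau(s,r)}{\tau(s+1,r)\tau(s,r,\boldsymbol t-[\lambda^{-1}])}\Phi_1(s,r)-\lambda^{-1}\frac{\tau(s+1,r,\boldsymbol t-[\lambda^{-1}])\tau(s+1,r+1)}{\tau(s+1,r)\tau(s,r,\boldsymbol t-[\lambda^{-1}])}\Phi_2(s+1,r,\boldsymbol t-[\lambda^{-1}])=0,$$ $$\Phi_2(s,r,\boldsymbol t+[\lambda^{-1}])+\lambda^{-1}\Phi_2(s-1,r)-\frac{\tau(s-1,r,\boldsymbol t+[\lambda^{-1}])\tau(s,r)}{\tau(s-1,r)\tau(s,r,\boldsymbol t+[\lambda^{-1}])}\Phi_2(s,r)-\lambda^{-1}\frac{\tau(s-1,r,\boldsymbol t+[\lambda^{-1}])\tau(s-1,r-1)}{\tau(s-1,r)\tau(s,r,\boldsymbol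 t+[\lambda^{-1}])}\Phi_1(s-1,r,\boldsymbol t+[\lambda^{-1}])=0,$$ $$\Phi_1(s,r,\bar{\boldsymbol t}-[\lambda])-\Phi_1(s,r)+\lambda\frac{\tau(s+1,r,\bar{\boldsymbol t}-[\lambda])\tau(s-1,r)}{\tau(s,r)\tau(s,r,\bar{\boldsymbol t}-[\lambda])}\Phi_1(s-1,r)-\lambda\frac{\tau(s+1,r,\bar{\boldsymbol t}-[\lambda])\tau(s,r+1)}{\tau(s,r)\tau(s,r,\bar{\boldsymbol t}-[\lambda])}\Phi_2(s+1,r,\bar{\boldsymbol t}-[\lambda])=0,$$ $$\Phi_2(s,r,\bar{\boldsymbol t}+[\lambda])-\Phi_2(s,r)+\lambda\frac{\tau(s-1,r,\bar{\boldsymbol t}+[\lambda])\tau(s+1,r)}{\tau(s,r)\tau(s,r,\bar{\boldsymbol t}+[\lambda])}\Phi_2(s+1,r)-\lambda\frac{\tau(s-1,r,\bar{\boldsymbol t}+[\lambda])\tau(s,r-1)}{\tau(s,r)\tau(s,r,\bar{\boldsymbol t}+[\lambda])}\Phi_1(s-1,r,\bar{\boldsymbol t}+[\lambda])=0.$$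
   Context: $\boldsymbol t=(t_1,t_2,\dots)$, $\bar{\boldsymbol t}=(\bar t_1,\bar t_2,\dots)$, $s,r\in\mathbb Z$, $[z]=(z,z^2/2,z^3/3,\dots)$, $\xi(\boldsymbol t,z)=\sum_{k\ge1}t_kz^k$; $\tau(s,r)=\tau(s,r,\boldsymbol t,\bar{\boldsymbol t})$, and $\tau(s,r,\boldsymbol a,\bar{\boldsymbol a})$ in the Fay identities below means $\tau(s,r,\boldsymbol t+\boldsymbol a,\bar{\boldsymbol t}+\bar{\boldsymbol a})$. Wave functions: $\Psi_1=z^{s+r}e^{\xi(\boldsymbol t,z)}\frac{\tau(s,r,\boldsymbol t-[z^{-1}],\bar{\boldsymbol t})}{\tau(s,r)}$, $\Psi_2=z^{s+r-2}e^{\xi(\boldsymbol t,z)}\frac{\tau(s-1,r-1,\boldsymbol t-[z^{-1}],\bar{\boldsymbol t})}{\tau(s,r)}$, $\Psi^*_1=z^{-s-r-2}e^{-\xi(\boldsymbol t,z)}\frac{\tau(s+1,r+1,\boldsymbol t+[z^{-1}],\bar{\boldsymbol t})}{\tau(s,r)}$, $\Psi^*_2=z^{-s-r}e^{-\xi(\boldsymbol t,z)}\frac{\tau(s,r,\boldsymbol t+[z^{-1}],\bar{\boldsymbol t})}{\tau(s,r)}$, $\bar\Psi_1=z^{s-r}e^{\xi(\bar{\boldsymbol t},z^{-1})}\frac{\tau(s+1,r,\boldsymbol t,\bar{\boldsymbol t}-[z])}{\tau(s,r)}$, $\bar\Psi_2=z^{s-r}e^{\xi(\bar{\boldsymbol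 t},z^{-1})}\frac{\tau(s,r-1,\boldsymbol t,\bar{\boldsymbol t}-[z])}{\tau(s,r)}$, $\bar\Psi^*_1=z^{-s+r}e^{-\xi(\bar{\boldsymbol t},z^{-1})}\frac{\tau(s,r+1,\boldsymbol t,\bar{\boldsymbol t}+[z])}{\tau(s,r)}$, $\bar\Psi^*_2=z^{-s+r}e^{-\xi(\bar{\boldsymbol t},z^{-1})}\frac{\tau(s-1,r,\boldsymbol t,\bar{\boldsymbol t}+[z])}{\tau(s,r)}$ (here with $z=\mu$). Difference Fay identities (for all $s,r,\boldsymbol t,\bar{\boldsymbol t}$ and parameters $\lambda\ne\mu$): (1a) $-\frac{\mu}{\lambda-\mu}\tau(s+1,r,[\mu^{-1}],0)\tau(s+1,r+1,[\lambda^{-1}],0)-\frac{\lambda}{\mu-\lambda}\tau(s+1,r,[\lambda^{-1}],0)\tau(s+1,r+1,[\mu^{-1}],0)+\frac1{\lambda\mu}\tau(s+2,r+1,[\lambda^{-1}]+[\mu^{-1}],0)\tau(s,r)=\tau(s+1,r+1,[\lambda^{-1}]+[\mu^{-1}],0)\tau(s+1,r)$; (1b) $-\frac{\mu}{\lambda-\mu}\tau(s,r+1,[\mu^{-1}],0)\tau(s+1,r+1,[\lambda^{-1}],0)-\frac{\lambda}{\mu-\lambda}\tau(s,r+1,[\lambda^{-1}],0)\tau(s+1,r+1,[\mu^{-1}],0)+\frac1{\lambda\mu}\tau(s+1,r+2,[\lambda^{-1}]+[\mu^{-1}],0)\tau(s,r)=\tau(s+1,r+1,[\lambda^{-1}]+[\mu^{-1}],0)\tau(s,r+1)$;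 (2a) $\tau(s,r+1,0,[\lambda]+[\mu])\tau(s,r)=\frac{\lambda}{\lambda-\mu}\tau(s,r,0,[\mu])\tau(s,r+1,0,[\lambda])+\frac{\mu}{\mu-\lambda}\tau(s,r,0,[\lambda])\tau(s,r+1,0,[\mu])+\lambda\mu\,\tau(s-1,r+1,0,[\lambda]+[\mu])\tau(s+1,r)$; (2b) $\tau(s,r+1,0,[\lambda]+[\mu])\tau(s+1,r+1)=\frac{\lambda}{\lambda-\mu}\tau(s+1,r+1,0,[\mu])\tau(s,r+1,0,[\lambda])+\frac{\mu}{\mu-\lambda}\tau(s+1,r+1,0,[\lambda])\tau(s,r+1,0,[\mu])+\lambda\mu\,\tau(s,r+2,0,[\lambda]+[\mu])\tau(s+1,r)$; (3a) $\lambda^{-1}\tau(s,r,0,[\mu])\tau(s+1,r+1,[\lambda^{-1}],0)-\lambda^{-1}\tau(s+1,r+1,[\lambda^{-1}],[\mu])\tau(s,r)=\mu\,\tau(s+1,r,[\lambda^{-1}],0)\tau(s,r+1,0,[\mu])-\mu\,\tau(s,r+1,[\lambda^{-1}],[\mu])\tau(s+1,r)$; (3b) $\lambda^{-1}\tau(s-1,r+1,0,[\mu])\tau(s+1,r+1,[\lambda^{-1}],0)-\lambda^{-1}\tau(s,r+2,[\lambda^{-1}],[\mu])\tau(s,r)=\mu^{-1}\tau(s,r+1,[\lambda^{-1}],0)\tau(s,r+1,0,[\mu])-\mu^{-1}\tau(s,r+1,[\lambda^{-1}],[\mu])\tau(s,r+1)$. *)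

(* Defs.v *)
From HB Require Import structures.
From mathcomp Require Import all_boot all_order all_algebra.
Set Implicit Arguments. Unset Strict Implicit. Unset Printing Implicit Defensive.
Import Order.TTheory GRing.Theory Num.Theory.
Local Open Scope ring_scope.

Section Defs.
Variable K : fieldType.

(* A time vector t = (t_1, t_2, ...) is a function nat -> K, with t k = t_{k+1}. *)
Definition times := nat -> K.

Definition tzero : times := fun _ => 0.
Definition tadd (t a : times) : times := fun k => t k + a k.
Definition tsub (t a : times) : times := fun k => t k - a k.

(* [z] = (z, z^2/2, z^3/3, ...) *)
Definition brk (z : K) : times := fun k => z ^+ k.+1 / (k.+1)%:R.

Definition tauT := int -> int -> times -> times -> K.

Definition waveT := int -> int -> times -> times -> K -> K.

(* E t z plays the role of the formal exponential e^{xi(t,z)}: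
   it is nowhere zero, additive-to-multiplicative in t, and satisfies the
   formal identity e^{xi([c],z)} = exp(sum_k (cz)^k/k) = 1/(1 - c z). *)
Definition formal_exp_xi (E : times -> K -> K) : Prop :=
  [/\ forall t z, E t z != 0,
      forall t a z, E (tadd t a) z = E t z * E a z
    & forall c z, c * z != 1 -> E (brk c) z = (1 - c * z)^-1].

Definition nowhere_zero (tau : tauT) : Prop :=
  forall s r t tb, tau s r t tb != 0.

Definition Psi1 (E : times -> K -> K) (tau : tauT) : waveT :=
  fun s r t tb z => z ^ (s + r) * E t z * tau s r (tsub t (brk z^-1)) tb / tau s r t tb.
Definition Psi2 (E : times -> K -> K) (tau : tauT) : waveT :=
  fun s r t tb z => z ^ (s + r - 2) * E t z
                    * tau (s - 1) (r - 1) (tsub t (brk z^-1)) tb / tau s r t tb.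
Definition Psi1s (E : times -> K -> K) (tau : tauT) : waveT :=
  fun s r t tb z => z ^ (- s - r - 2) * (E t z)^-1
                    * tau (s + 1) (r + 1) (tadd t (brk z^-1)) tb / tau s r t tb.
Definition Psi2s (E : times -> K -> K) (tau : tauT) : waveT :=
  fun s r t tb z => z ^ (- s - r) * (E t z)^-1
                    * tau s r (tadd t (brk z^-1)) tb / tau s r t tb.
Definition Psib1 (E : times -> K -> K) (tau : tauT) : waveT :=
  fun s r t tb z => z ^ (s - r) * E tb z^-1
                    * tau (s + 1) r t (tsub tb (brk z)) / tau s r t tb.
Definition Psib2 (E : times -> K -> K) (tau : tauT) : waveT :=
  fun s r t tb z => z ^ (s - r) * E tb z^-1
                    * tau s (r - 1) t (tsub tb (brk z)) / tau s r t tb.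
Definition Psib1s (E : times -> K -> K) (tau : tauT) : waveT :=
  fun s r t tb z => z ^ (- s + r) * (E tb z^-1)^-1
                    * tau s (r + 1) t (tadd tb (brk z)) / tau s r t tb.
Definition Psib2s (E : times -> K -> K) (tau : tauT) : waveT :=
  fun s r t tb z => z ^ (- s + r) * (E tb z^-1)^-1
                    * tau (s - 1) r t (tadd tb (brk z)) / tau s r t tb.

Definition fay_identities (tau : tauT) : Prop :=
  forall (s r : int) (t tb : times) (lam mu : K),
    lam != 0 -> mu != 0 -> lam != mu ->
  let T s' r' a ab := tau s' r' (tadd t a) (tadd tb ab) in
  let L := brk lam^-1 in let M := brk mu^-1 in
  let l := brk lam in let m := brk mu in
  let o := tzero in
  (
  - (mu / (lam - mu)) * T (s + 1) r M o * T (s + 1) (r + 1) L o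
  - (lam / (mu - lam)) * T (s + 1) r L o * T (s + 1) (r + 1) M o
  + (lam * mu)^-1 * T (s + 2) (r + 1) (tadd L M) o * tau s r t tb
  = T (s + 1) (r + 1) (tadd L M) o * tau (s + 1) r t tb) /\
  (
  - (mu / (lam - mu)) * T s (r + 1) M o * T (s + 1) (r + 1) L o
  - (lam / (mu - lam)) * T s (r + 1) L o * T (s + 1) (r + 1) M o
  + (lam * mu)^-1 * T (s + 1) (r + 2) (tadd L M) o * tau s r t tb
  = T (s + 1) (r + 1) (tadd L M) o * tau s (r + 1) t tb) /\
  (
  T s (r + 1) o (tadd l m) * tau s r t tb
  = lam / (lam - mu) * T s r o m * T s (r + 1) o l
  + mu / (mu - lam) * T s r o l * T s (r + 1) o m
  + lam * mu * T (s - 1) (r + 1) o (tadd l m) * tau (s + 1) r t tb) /\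
  (
  T s (r + 1) o (tadd l m) * tau (s + 1) (r + 1) t tb
  = lam / (lam - mu) * T (s + 1) (r + 1) o m * T s (r + 1) o l
  + mu / (mu - lam) * T (s + 1) (r + 1) o l * T s (r + 1) o m
  + lam * mu * T s (r + 2) o (tadd l m) * tau (s + 1) r t tb) /\
  (
  lam^-1 * T s r o m * T (s + 1) (r + 1) L o
  - lam^-1 * T (s + 1) (r + 1) L m * tau s r t tb
  = mu * T (s + 1) r L o * T s (r + 1) o m
  - mu * T s (r + 1) L m * tau (s + 1) r t tb) /\
  (
  lam^-1 * T (s - 1) (r + 1) o m * T (s + 1) (r + 1) L o
  - lam^-1 * T s (r + 2) L m * tau s r t tb
  = mu^-1 * T s (r + 1) L o * T s (r + 1) o m
  - mu^-1 * T s (r + 1) L m * tau s (r + 1) t tb).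

Definition wave_equations (tau : tauT) (Phi1 Phi2 : waveT) : Prop :=
  forall (s r : int) (t tb : times) (lam mu : K),
    lam != 0 -> mu != 0 -> lam != mu ->
  let tL := tsub t (brk lam^-1) in
  let tLp := tadd t (brk lam^-1) in
  let bl := tsub tb (brk lam) in
  let blp := tadd tb (brk lam) in
  [/\
  Phi1 s r tL tb mu + lam^-1 * Phi1 (s + 1) r t tb mu
  - (tau (s + 1) r tL tb * tau s r t tb) / (tau (s + 1) r t tb * tau s r tL tb)
      * Phi1 s r t tb mu
  - lam^-1 * ((tau (s + 1) r tL tb * tau (s + 1) (r + 1) t tb)
               / (tau (s + 1) r t tb * tau s r tL tb))
      * Phi2 (s + 1) r tL tb mu = 0,
  Phi2 s r tLp tb mu + lam^-1 * Phi2 (s - 1) r t tb mu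
  - (tau (s - 1) r tLp tb * tau s r t tb) / (tau (s - 1) r t tb * tau s r tLp tb)
      * Phi2 s r t tb mu
  - lam^-1 * ((tau (s - 1) r tLp tb * tau (s - 1) (r - 1) t tb)
               / (tau (s - 1) r t tb * tau s r tLp tb))
      * Phi1 (s - 1) r tLp tb mu = 0,
  Phi1 s r t bl mu - Phi1 s r t tb mu
  + lam * ((tau (s + 1) r t bl * tau (s - 1) r t tb)
            / (tau s r t tb * tau s r t bl))
      * Phi1 (s - 1) r t tb mu
  - lam * ((tau (s + 1) r t bl * tau s (r + 1) t tb)
            / (tau s r t tb * tau s r t bl))
      * Phi2 (s + 1) r t bl mu = 0
  & Phi2 s r t blp mu - Phi2 s r t tb mu
  + lam * ((tau (s - 1) r t blp * tau (s + 1) r t tb)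
            / (tau s r t tb * tau s r t blp))
      * Phi2 (s + 1) r t tb mu
  - lam * ((tau (s - 1) r t blp * tau s (r - 1) t tb)
            / (tau s r t tb * tau s r t blp))
      * Phi1 (s - 1) r t blp mu = 0 ].

End Defs.

(* Main.v *)
Require Import Defs.
From HB Require Import structures.
From mathcomp Require Import all_boot all_order all_algebra.
Import Order.TTheory GRing.Theory Num.Theory.
Local Open Scope ring_scope.
From Stdlib Require Import Field Ring FunctionalExtensionality.

Section Alg.
Variable K : fieldType.
Definition k0 : K := 0.
Definition k1 : K := 1.
Definition kadd (x y : K) : K := x + y.
Definition kmul (x y : K) : K := x * y.
Definition kopp (x : K) : K := - x.
Definition kinv (x : K) : K := x^-1.
Definition ksub (x y : K) : K := x - y.
Definition kdiv (x y : K) : K := x / y.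
Lemma Kfield : @field_theory K k0 k1 kadd kmul ksub kopp kdiv kinv eq.
Proof.
rewrite /k0 /k1 /kadd /kmul /ksub /kopp /kdiv /kinv.
constructor.
- constructor => //. exact: add0r. exact: addrC. exact: addrA. exact: mul1r. exact: mulrC. exact: mulrA. exact: mulrDl. move=> x; exact: subrr.
- apply/eqP; exact: oner_neq0.
- by [].
- move=> p /eqP; exact: mulVf.
Qed.
Add Field Kf : Kfield.

Lemma addE (x y : K) : x + y = kadd x y. Proof. by []. Qed.
Lemma mulE (x y : K) : x * y = kmul x y. Proof. by []. Qed.
Lemma oppE (x : K) : - x = kopp x. Proof. by []. Qed.
Lemma invE (x : K) : x^-1 = kinv x. Proof. by []. Qed.
Lemma zeroE : 0 = k0. Proof. by []. Qed.
Lemma oneE : 1 = k1. Proof. by []. Qed.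
Ltac knorm := rewrite ?addE ?mulE ?oppE ?invE ?zeroE ?oneE;
  try match goal with |- ?a = ?b => change (@eq (GRing.Field.sort K) a b) end.
Ltac kunfold := rewrite /k0 /k1 /kadd /kmul /ksub /kopp /kdiv /kinv.

Hypothesis hK : [pchar K] =i pred0.
Lemma zinj (a b : int) : (a%:~R : K) = b%:~R -> a = b.
Proof.
move/eqP; rewrite -subr_eq0 -intrB => h; apply/eqP; rewrite -subr_eq0; move: h.
case: (a - b) => n; rewrite ?NegzE ?intrN ?oppr_eq0 -pmulrn;
  by move/pcharf0P: hK => ->; move/eqP=> ->.
Qed.
Lemma two : (2%:R : K) = 1 + 1. Proof. by rewrite mulr2n. Qed.
Ltac zK := apply: zinj; rewrite ?(intrD, intrB, intrN) ?intr_nat ?mulr1z ?two; knorm; ring.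

Lemma zA (x : int) : x - 1 + 1 = x. Proof. zK. Qed.
Lemma zB (x : int) : x - 1 + 2 = x + 1. Proof. zK. Qed.
Lemma zC (x : int) : x - 2 + 1 = x - 1. Proof. zK. Qed.
Lemma zD (x : int) : x - 2 + 2 = x. Proof. zK. Qed.
Lemma zE (x : int) : x + 1 - 1 = x. Proof. zK. Qed.
Lemma zF (x : int) : x - 1 - 1 = x - 2. Proof. zK. Qed.
Lemma zG (x : int) : x + 1 + 1 = x + 2. Proof. zK. Qed.
Lemma zH (x : int) : x + 1 - 2 = x - 1. Proof. zK. Qed.
Lemma zI (x : int) : x - 1 + 1 + 1 = x + 1. Proof. zK. Qed.
Lemma zJ (x : int) : x + 1 + 2 = x + 3. Proof. zK. Qed.


Variable E : times K -> K -> K.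
Hypothesis HE : formal_exp_xi E.
Variable tau : tauT K.
Hypothesis Htau : nowhere_zero tau.

Definition F1a (s r : int) (t tb : times K) (lam mu : K) : Prop :=
  let T s' r' a ab := tau s' r' (tadd t a) (tadd tb ab) in
  let L := brk lam^-1 in let M := brk mu^-1 in
  let o := tzero K in
  - (mu / (lam - mu)) * T (s + 1) r M o * T (s + 1) (r + 1) L o
  - (lam / (mu - lam)) * T (s + 1) r L o * T (s + 1) (r + 1) M o
  + (lam * mu)^-1 * T (s + 2) (r + 1) (tadd L M) o * tau s r t tb
  = T (s + 1) (r + 1) (tadd L M) o * tau (s + 1) r t tb.
Definition F1b (s r : int) (t tb : times K) (lam mu : K) : Prop :=
  let T s' r' a ab := tau s' r' (tadd t a) (tadd tb ab) in
  let L := brk lam^-1 in let M := brk mu^-1 in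
  let o := tzero K in
  - (mu / (lam - mu)) * T s (r + 1) M o * T (s + 1) (r + 1) L o
  - (lam / (mu - lam)) * T s (r + 1) L o * T (s + 1) (r + 1) M o
  + (lam * mu)^-1 * T (s + 1) (r + 2) (tadd L M) o * tau s r t tb
  = T (s + 1) (r + 1) (tadd L M) o * tau s (r + 1) t tb.
Definition F2a (s r : int) (t tb : times K) (lam mu : K) : Prop :=
  let T s' r' a ab := tau s' r' (tadd t a) (tadd tb ab) in
  let l := brk lam in let m := brk mu in
  let o := tzero K in
  T s (r + 1) o (tadd l m) * tau s r t tb
  = lam / (lam - mu) * T s r o m * T s (r + 1) o l
  + mu / (mu - lam) * T s r o l * T s (r + 1) o m
  + lam * mu * T (s - 1) (r + 1) o (tadd l m) * tau (s + 1) r t tb.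
Definition F2b (s r : int) (t tb : times K) (lam mu : K) : Prop :=
  let T s' r' a ab := tau s' r' (tadd t a) (tadd tb ab) in
  let l := brk lam in let m := brk mu in
  let o := tzero K in
  T s (r + 1) o (tadd l m) * tau (s + 1) (r + 1) t tb
  = lam / (lam - mu) * T (s + 1) (r + 1) o m * T s (r + 1) o l
  + mu / (mu - lam) * T (s + 1) (r + 1) o l * T s (r + 1) o m
  + lam * mu * T s (r + 2) o (tadd l m) * tau (s + 1) r t tb.
Definition F3a (s r : int) (t tb : times K) (lam mu : K) : Prop :=
  let T s' r' a ab := tau s' r' (tadd t a) (tadd tb ab) in
  let L := brk lam^-1 in let m := brk mu in
  let o := tzero K in
  lam^-1 * T s r o m * T (s + 1) (r + 1) L o
  - lam^-1 * T (s + 1) (r + 1) L m * tau s r t tb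
  = mu * T (s + 1) r L o * T s (r + 1) o m
  - mu * T s (r + 1) L m * tau (s + 1) r t tb.
Definition F3b (s r : int) (t tb : times K) (lam mu : K) : Prop :=
  let T s' r' a ab := tau s' r' (tadd t a) (tadd tb ab) in
  let L := brk lam^-1 in let m := brk mu in
  let o := tzero K in
  lam^-1 * T (s - 1) (r + 1) o m * T (s + 1) (r + 1) L o
  - lam^-1 * T s (r + 2) L m * tau s r t tb
  = mu^-1 * T s (r + 1) L o * T s (r + 1) o m
  - mu^-1 * T s (r + 1) L m * tau s (r + 1) t tb.

Lemma fay_iff : fay_identities tau <->
  forall s r t tb lam mu, lam != 0 -> mu != 0 -> lam != mu ->
  F1a s r t tb lam mu /\ F1b s r t tb lam mu /\ F2a s r t tb lam mu /\
      F2b s r t tb lam mu /\ F3a s r t tb lam mu /\ F3b s r t tb lam mu.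
Proof. by []. Qed.

Definition W1 (Phi1 Phi2 : waveT K) (s r : int) (t tb : times K) (lam mu : K) : K :=
  let tL := tsub t (brk lam^-1) in
  Phi1 s r tL tb mu + lam^-1 * Phi1 (s + 1) r t tb mu
  - (tau (s + 1) r tL tb * tau s r t tb) / (tau (s + 1) r t tb * tau s r tL tb)
      * Phi1 s r t tb mu
  - lam^-1 * ((tau (s + 1) r tL tb * tau (s + 1) (r + 1) t tb)
               / (tau (s + 1) r t tb * tau s r tL tb))
      * Phi2 (s + 1) r tL tb mu.
Definition W2 (Phi1 Phi2 : waveT K) (s r : int) (t tb : times K) (lam mu : K) : K :=
  let tLp := tadd t (brk lam^-1) in
  Phi2 s r tLp tb mu + lam^-1 * Phi2 (s - 1) r t tb mu
  - (tau (s - 1) r tLp tb * tau s r t tb) / (tau (s - 1) r t tb * tau s r tLp tb)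
      * Phi2 s r t tb mu
  - lam^-1 * ((tau (s - 1) r tLp tb * tau (s - 1) (r - 1) t tb)
               / (tau (s - 1) r t tb * tau s r tLp tb))
      * Phi1 (s - 1) r tLp tb mu.
Definition W3 (Phi1 Phi2 : waveT K) (s r : int) (t tb : times K) (lam mu : K) : K :=
  let bl := tsub tb (brk lam) in
  Phi1 s r t bl mu - Phi1 s r t tb mu
  + lam * ((tau (s + 1) r t bl * tau (s - 1) r t tb)
            / (tau s r t tb * tau s r t bl))
      * Phi1 (s - 1) r t tb mu
  - lam * ((tau (s + 1) r t bl * tau s (r + 1) t tb)
            / (tau s r t tb * tau s r t bl))
      * Phi2 (s + 1) r t bl mu.
Definition W4 (Phi1 Phi2 : waveT K) (s r : int) (t tb : times K) (lam mu : K) : K :=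
  let blp := tadd tb (brk lam) in
  Phi2 s r t blp mu - Phi2 s r t tb mu
  + lam * ((tau (s - 1) r t blp * tau (s + 1) r t tb)
            / (tau s r t tb * tau s r t blp))
      * Phi2 (s + 1) r t tb mu
  - lam * ((tau (s - 1) r t blp * tau s (r - 1) t tb)
            / (tau s r t tb * tau s r t blp))
      * Phi1 (s - 1) r t blp mu.

Lemma wave_iff Phi1 Phi2 : wave_equations tau Phi1 Phi2 <->
  forall s r t tb lam mu, lam != 0 -> mu != 0 -> lam != mu ->
  [/\ W1 Phi1 Phi2 s r t tb lam mu = 0, W2 Phi1 Phi2 s r t tb lam mu = 0,
      W3 Phi1 Phi2 s r t tb lam mu = 0 & W4 Phi1 Phi2 s r t tb lam mu = 0].
Proof. by []. Qed.

Lemma teq (x y : times K) : (forall k, x k = y k) -> x = y.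
Proof. by move=> h; apply: functional_extensionality. Qed.
Ltac tK := apply: teq => k; rewrite /tadd /tsub /tzero; knorm; ring.
Lemma tadd0 (x : times K) : tadd x (tzero K) = x. Proof. tK. Qed.
Lemma tsubK (x a : times K) : tadd (tsub x a) a = x. Proof. tK. Qed.
Lemma taddK (x a : times K) : tsub (tadd x a) a = x. Proof. tK. Qed.
Lemma tsubC (x a b : times K) : tadd (tsub (tsub x a) b) a = tsub x b. Proof. tK. Qed.
Lemma tsubAB (x a b : times K) : tadd (tsub (tsub x a) b) (tadd a b) = x. Proof. tK. Qed.
Lemma tsubAB2 (x a b : times K) : tadd (tsub x b) (tadd a b) = tadd x a. Proof. tK. Qed.
Lemma tsubAB3 (x a b : times K) : tadd (tsub x a) (tadd a b) = tadd x b. Proof. tK. Qed.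
Lemma taddsub (x a b : times K) : tsub (tadd x a) b = tadd (tsub x b) a. Proof. tK. Qed.

Lemma E0 t z : E t z != 0. Proof. by case: HE. Qed.
Lemma EV t z : (E t z)^-1 != 0. Proof. by rewrite invr_eq0 E0. Qed.
Lemma Eadd t a z : E (tadd t a) z = E t z * E a z. Proof. by case: HE. Qed.
Lemma Esub t a z : E (tsub t a) z = E t z / E a z.
Proof. by rewrite -{2}(tsubK t a) Eadd mulfK ?E0. Qed.
Lemma Ebrk c z : c * z != 1 -> E (brk c) z = (1 - c * z)^-1.
Proof. by case: HE => _ _ H; apply: H. Qed.
Lemma tau0 s r t tb : tau s r t tb != 0. Proof. exact: Htau. Qed.

Lemma zp1 (x : K) : x ^ (1 : int) = x. Proof. by []. Qed.
Lemma zp2 (x : K) : x ^ (2 : int) = x * x. Proof. by rewrite /exprz /= expr2. Qed.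
Lemma zp3 (x : K) : x ^ (3 : int) = x * x * x. Proof. by rewrite /exprz /= !exprS expr0 mulr1 mulrA. Qed.

Lemma iff_scale (X A B c : K) : c != 0 -> X = c * (A - B) -> (X = 0 <-> A = B).
Proof.
move=> hc ->; split; last by move=> ->; rewrite subrr mulr0.
by move/eqP; rewrite mulf_eq0 (negbTE hc) /= subr_eq0 => /eqP.
Qed.

Lemma c1 (lam mu : K) : lam != 0 -> lam != mu -> lam^-1 * mu != 1.
Proof.
move=> hl hlm; apply/negP => /eqP h; move: hlm; rewrite -[lam]mulr1 -h.
by rewrite mulrA mulfV // mul1r eqxx.
Qed.
Lemma c2 (lam mu : K) : mu != 0 -> lam != mu -> lam * mu^-1 != 1.
Proof.
move=> hm hlm; apply/negP => /eqP h; move: hlm; rewrite -[mu]mul1r -h.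
by rewrite -mulrA mulVf // mulr1 eqxx.
Qed.
Lemma subnz (x y : K) : x != y -> x - y != 0. Proof. by rewrite subr_eq0. Qed.
Lemma onenz (x : K) : x != 1 -> 1 - x != 0. Proof. by rewrite subr_eq0 eq_sym. Qed.

Ltac nz := repeat (apply: mulf_neq0 || apply: invr_neq0 || rewrite oppr_eq0);
  try solve [apply: tau0 | apply: E0 | apply: EV | apply: expfz_neq0; done | done
    | apply: onenz; apply: c1; done | apply: onenz; apply: c2; done | apply: subnz; done
    | apply: subnz; rewrite eq_sym; done | apply: oner_neq0].

Ltac kside := repeat split; kunfold; apply/eqP; nz.

Lemma taddA (x a b : times K) : tadd x (tadd a b) = tadd (tadd x a) b. Proof. tK. Qed.

Ltac solveW c :=
  let hl := fresh "hl" in let hm := fresh "hm" in let hlm := fresh "hlm" in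
  move=> hl hm hlm; rewrite /F1a /F1b /F2a /F2b /F3a /F3b /=;
  apply: (@iff_scale _ _ _ c); [solve [nz] | ];
  rewrite /W1 /W2 /W3 /W4 /Psi1 /Psi2 /Psi1s /Psi2s /Psib1 /Psib2 /Psib1s /Psib2s /=;
  rewrite ?tadd0 ?taddsub ?tsubAB ?tsubAB2 ?tsubAB3 ?tsubC ?tsubK ?taddK ?taddA;
  rewrite ?zA ?zB ?zC ?zD ?zE ?zF ?zG ?zH ?zI ?zJ;
  rewrite ?Esub ?Eadd ?(Ebrk _ _ (c1 _ _ hl hlm)) ?(Ebrk _ _ (c2 _ _ hm hlm));
  rewrite ?opprD ?opprK !(expfzDr _ _ hm) -?invr_expz ?zp1 ?zp2 ?zp3;
  knorm; field; kside.

Notation L lam := (brk lam^-1).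
Notation l lam := (brk lam).

Lemma P1e1 s r t tb lam mu : lam != 0 -> mu != 0 -> lam != mu ->
  W1 (Psi1 E tau) (Psi2 E tau) s r t tb lam mu = 0 <->
  F1b s (r - 1) (tsub (tsub t (L lam)) (L mu)) tb lam mu.
Proof. solveW (- (1 - lam^-1 * mu) * (mu ^ (s + r) * E t mu)
   / (tau (s+1) r t tb * tau s r (tsub t (L lam)) tb)). Qed.
Lemma P1e2 s r t tb lam mu : lam != 0 -> mu != 0 -> lam != mu ->
  W2 (Psi1 E tau) (Psi2 E tau) s r t tb lam mu = 0 <->
  F1a (s - 2) (r - 1) (tsub t (L mu)) tb lam mu.
Proof. solveW ((mu ^ (s + r - 2) * E t mu)
   / (tau (s - 1) r t tb * tau s r (tadd t (L lam)) tb)). Qed.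
Lemma P1e3 s r t tb lam mu : lam != 0 -> mu != 0 -> lam != mu ->
  W3 (Psi1 E tau) (Psi2 E tau) s r t tb lam mu = 0 <->
  F3b s (r - 1) (tsub t (L mu)) (tsub tb (l lam)) mu lam.
Proof. solveW (lam * (mu ^ (s + r) * E t mu)
   / (tau s r t tb * tau s r t (tsub tb (l lam)))). Qed.
Lemma P1e4 s r t tb lam mu : lam != 0 -> mu != 0 -> lam != mu ->
  W4 (Psi1 E tau) (Psi2 E tau) s r t tb lam mu = 0 <->
  F3a (s - 1) (r - 1) (tsub t (L mu)) tb mu lam.
Proof. solveW (mu * (mu ^ (s + r - 2) * E t mu)
   / (tau s r t tb * tau s r t (tadd tb (l lam)))). Qed.

Lemma P2e1 s r t tb lam mu : lam != 0 -> mu != 0 -> lam != mu ->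
  W1 (Psi1s E tau) (Psi2s E tau) s r t tb lam mu = 0 <->
  F1a s r (tsub t (L lam)) tb lam mu.
Proof. solveW ((mu ^ (- s - r - 2) * (E t mu)^-1)
   / (tau (s+1) r t tb * tau s r (tsub t (L lam)) tb)). Qed.
Lemma P2e2 s r t tb lam mu : lam != 0 -> mu != 0 -> lam != mu ->
  W2 (Psi1s E tau) (Psi2s E tau) s r t tb lam mu = 0 <->
  F1b (s - 1) (r - 1) t tb lam mu.
Proof. solveW (- (1 - lam^-1 * mu) * (mu ^ (- s - r) * (E t mu)^-1)
   / (tau (s - 1) r t tb * tau s r (tadd t (L lam)) tb)). Qed.
Lemma P2e3 s r t tb lam mu : lam != 0 -> mu != 0 -> lam != mu ->
  W3 (Psi1s E tau) (Psi2s E tau) s r t tb lam mu = 0 <->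
  F3a s r t (tsub tb (l lam)) mu lam.
Proof. solveW (mu * (mu ^ (- s - r - 2) * (E t mu)^-1)
   / (tau s r t tb * tau s r t (tsub tb (l lam)))). Qed.
Lemma P2e4 s r t tb lam mu : lam != 0 -> mu != 0 -> lam != mu ->
  W4 (Psi1s E tau) (Psi2s E tau) s r t tb lam mu = 0 <->
  F3b s (r - 1) t tb mu lam.
Proof. solveW (lam * (mu ^ (- s - r) * (E t mu)^-1)
   / (tau s r t tb * tau s r t (tadd tb (l lam)))). Qed.

Lemma P3e1 s r t tb lam mu : lam != 0 -> mu != 0 -> lam != mu ->
  W1 (Psib1 E tau) (Psib2 E tau) s r t tb lam mu = 0 <->
  F3b (s + 1) (r - 1) (tsub t (L lam)) (tsub tb (l mu)) lam mu.
Proof. solveW (mu * (mu ^ (s - r) * E tb mu^-1)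
   / (tau (s+1) r t tb * tau s r (tsub t (L lam)) tb)). Qed.
Lemma P3e2 s r t tb lam mu : lam != 0 -> mu != 0 -> lam != mu ->
  W2 (Psib1 E tau) (Psib2 E tau) s r t tb lam mu = 0 <->
  F3a (s - 1) (r - 1) t (tsub tb (l mu)) lam mu.
Proof. solveW (- mu^-1 * (mu ^ (s - r) * E tb mu^-1)
   / (tau (s - 1) r t tb * tau s r (tadd t (L lam)) tb)). Qed.
Lemma P3e3 s r t tb lam mu : lam != 0 -> mu != 0 -> lam != mu ->
  W3 (Psib1 E tau) (Psib2 E tau) s r t tb lam mu = 0 <->
  F2b s (r - 1) t (tsub (tsub tb (l lam)) (l mu)) lam mu.
Proof. solveW ((1 - lam * mu^-1) * (mu ^ (s - r) * E tb mu^-1)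
   / (tau s r t tb * tau s r t (tsub tb (l lam)))). Qed.
Lemma P3e4 s r t tb lam mu : lam != 0 -> mu != 0 -> lam != mu ->
  W4 (Psib1 E tau) (Psib2 E tau) s r t tb lam mu = 0 <->
  F2a s (r - 1) t (tsub tb (l mu)) lam mu.
Proof. solveW (- 1 * (mu ^ (s - r) * E tb mu^-1)
   / (tau s r t tb * tau s r t (tadd tb (l lam)))). Qed.

Lemma P4e1 s r t tb lam mu : lam != 0 -> mu != 0 -> lam != mu ->
  W1 (Psib1s E tau) (Psib2s E tau) s r t tb lam mu = 0 <->
  F3a s r (tsub t (L lam)) tb lam mu.
Proof. solveW (- mu^-1 * (mu ^ (- s + r) * (E tb mu^-1)^-1)
   / (tau (s+1) r t tb * tau s r (tsub t (L lam)) tb)). Qed.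
Lemma P4e2 s r t tb lam mu : lam != 0 -> mu != 0 -> lam != mu ->
  W2 (Psib1s E tau) (Psib2s E tau) s r t tb lam mu = 0 <->
  F3b (s - 1) (r - 1) t tb lam mu.
Proof. solveW (mu * (mu ^ (- s + r) * (E tb mu^-1)^-1)
   / (tau (s - 1) r t tb * tau s r (tadd t (L lam)) tb)). Qed.
Lemma P4e3 s r t tb lam mu : lam != 0 -> mu != 0 -> lam != mu ->
  W3 (Psib1s E tau) (Psib2s E tau) s r t tb lam mu = 0 <->
  F2a s r t (tsub tb (l lam)) lam mu.
Proof. solveW (- 1 * (mu ^ (- s + r) * (E tb mu^-1)^-1)
   / (tau s r t tb * tau s r t (tsub tb (l lam)))). Qed.
Lemma P4e4 s r t tb lam mu : lam != 0 -> mu != 0 -> lam != mu ->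
  W4 (Psib1s E tau) (Psib2s E tau) s r t tb lam mu = 0 <->
  F2b (s - 1) (r - 1) t tb lam mu.
Proof. solveW ((1 - lam * mu^-1) * (mu ^ (- s + r) * (E tb mu^-1)^-1)
   / (tau s r t tb * tau s r t (tadd tb (l lam)))). Qed.

Lemma main : fay_identities tau <->
  [/\ wave_equations tau (Psi1 E tau) (Psi2 E tau),
      wave_equations tau (Psi1s E tau) (Psi2s E tau),
      wave_equations tau (Psib1 E tau) (Psib2 E tau)
    & wave_equations tau (Psib1s E tau) (Psib2s E tau)].
Proof.
split.
- move/fay_iff=> H.
  have hs : forall lam mu : K, lam != mu -> mu != lam by move=> ? ?; rewrite eq_sym.
  split; apply/wave_iff => s r t tb lam mu hl hm hlm; split.
  + by apply/P1e1 => //; case: (H s (r - 1) (tsub (tsub t (L lam)) (L mu)) tb lam mu hl hm hlm) => _ [].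
  + by apply/P1e2 => //; case: (H (s - 2) (r - 1) (tsub t (L mu)) tb lam mu hl hm hlm).
  + by apply/P1e3 => //; case: (H s (r - 1) (tsub t (L mu)) (tsub tb (l lam)) mu lam hm hl (hs _ _ hlm)) => _ [_ [_ [_ []]]].
  + by apply/P1e4 => //; case: (H (s - 1) (r - 1) (tsub t (L mu)) tb mu lam hm hl (hs _ _ hlm)) => _ [_ [_ [_ []]]].
  + by apply/P2e1 => //; case: (H s r (tsub t (L lam)) tb lam mu hl hm hlm).
  + by apply/P2e2 => //; case: (H (s - 1) (r - 1) t tb lam mu hl hm hlm) => _ [].
  + by apply/P2e3 => //; case: (H s r t (tsub tb (l lam)) mu lam hm hl (hs _ _ hlm)) => _ [_ [_ [_ []]]].
  + by apply/P2e4 => //; case: (H s (r - 1) t tb mu lam hm hl (hs _ _ hlm)) => _ [_ [_ [_ []]]].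
  + by apply/P3e1 => //; case: (H (s + 1) (r - 1) (tsub t (L lam)) (tsub tb (l mu)) lam mu hl hm hlm) => _ [_ [_ [_ []]]].
  + by apply/P3e2 => //; case: (H (s - 1) (r - 1) t (tsub tb (l mu)) lam mu hl hm hlm) => _ [_ [_ [_ []]]].
  + by apply/P3e3 => //; case: (H s (r - 1) t (tsub (tsub tb (l lam)) (l mu)) lam mu hl hm hlm) => _ [_ [_ []]].
  + by apply/P3e4 => //; case: (H s (r - 1) t (tsub tb (l mu)) lam mu hl hm hlm) => _ [_ []].
  + by apply/P4e1 => //; case: (H s r (tsub t (L lam)) tb lam mu hl hm hlm) => _ [_ [_ [_ []]]].
  + by apply/P4e2 => //; case: (H (s - 1) (r - 1) t tb lam mu hl hm hlm) => _ [_ [_ [_ []]]].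
  + by apply/P4e3 => //; case: (H s r t (tsub tb (l lam)) lam mu hl hm hlm) => _ [_ []].
  + by apply/P4e4 => //; case: (H (s - 1) (r - 1) t tb lam mu hl hm hlm) => _ [_ [_ []]].
- case=> _ /wave_iff H2 _ /wave_iff H4; apply/fay_iff => s r t tb lam mu hl hm hlm.
  split; [|split; [|split; [|split; [|split]]]].
  + case: (H2 s r (tadd t (L lam)) tb lam mu hl hm hlm) => h _ _ _.
    by move/(P2e1 _ _ _ _ _ _ hl hm hlm): h; rewrite taddK.
  + case: (H2 (s + 1) (r + 1) t tb lam mu hl hm hlm) => _ h _ _.
    by move/(P2e2 _ _ _ _ _ _ hl hm hlm): h; rewrite !zE.
  + case: (H4 s r t (tadd tb (l lam)) lam mu hl hm hlm) => _ _ h _.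
    by move/(P4e3 _ _ _ _ _ _ hl hm hlm): h; rewrite taddK.
  + case: (H4 (s + 1) (r + 1) t tb lam mu hl hm hlm) => _ _ _ h.
    by move/(P4e4 _ _ _ _ _ _ hl hm hlm): h; rewrite !zE.
  + case: (H4 s r (tadd t (L lam)) tb lam mu hl hm hlm) => h _ _ _.
    by move/(P4e1 _ _ _ _ _ _ hl hm hlm): h; rewrite taddK.
  + case: (H4 (s + 1) (r + 1) t tb lam mu hl hm hlm) => _ h _ _.
    by move/(P4e2 _ _ _ _ _ _ hl hm hlm): h; rewrite !zE.
Qed.

End Alg.

Theorem theorem5 (K : fieldType) (charK0 : [pchar K] =i pred0)
  (E : times K -> K -> K) (HE : formal_exp_xi E)
  (tau : tauT K) (Htau : nowhere_zero tau) :
  fay_identities tau <->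
  [/\ wave_equations tau (Psi1 E tau) (Psi2 E tau),
      wave_equations tau (Psi1s E tau) (Psi2s E tau),
      wave_equations tau (Psib1 E tau) (Psib2 E tau)
    & wave_equations tau (Psib1s E tau) (Psib2s E tau)].
Proof. exact: (@main K charK0 E HE tau Htau). Qed.
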